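(* Let $G=(V,E)$ be a finite undirected graph with $m=|E|\ge1$ edges, let $k_u$ denote the degree of node $u$, and let $G'$ be the random multigraph produced from $G$ by the configuration model (see context). Fix distinct nodes $i,j\in V$ with $k_i\ge1$ and $k_j\ge1$, and let $P_{ij}=\frac1{k_i}+\frac1{k_j}$. Let $W_{ij}$ be the random weight of the pair $(i,j)$ computed in $G'$ by the rule in the context. Write $P_{\mathrm{adj}}=\Pr(i \text{ and } j \text{ connected in } G')$, and for each $r\in V\setminus\{i,j\}$, $P_{\mathrm{cn}}(r)=\Pr(i \text{ and } r \text{ connected and } j \text{ and } r \text{ connected in } G')$ and $P_{\mathrm{tri}}(r)=\Pr(i,r \text{ connected},\ j,r \text{ connected, and } i,j \text{ connected in } G')$. Then: 1. If $k_i=1$ or $k_j=1$, \[ E[W_{ij}]=\frac{P_{ij}\sum_{r\in V\setminus\{i,j\}}P_{\mathrm{cn}}(r)}{4}+P_{ij}P_{\mathrm{adj}}. \] 2. If $k_i>1$ and $k_j>1$, \[ E[W_{ij}]=\frac{P_{ij}}{4}\sum_{r\in V\setminus\{i,j\}}\big(P_{\mathrm{cn}}(r)-P_{\mathrm{tri}}(r)\big)+2P_{ij}\sum_{r\in V\setminus\{i,j\}}P_{\mathrm{tri}}(r)+3P_{ij}P_{\mathrm{adj}}. \] Moreover, with the functions $A,C,T$ defined by $A(a,b,M)=\sum_{t=1}^{\min\{a,b\}}(-1)^{t+1}\frac{\binom{a}{t}\binom{b}{t}t!}{\prod_{p=1}^{t}(2M+1-2p)}$, $C(a,b,c,M)=\sum_{t=1}^{\min\{b,c-1\}}(-1)^{t+1}A(a,c-t,M-t)\frac{\binom{c}{t}\binom{b}{t}t!}{\prod_{p=1}^{t}(2M+1-2p)}$,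 $T(a,b,c,M)=\sum_{t=1}^{\min\{a-1,b-1\}}(-1)^{t+1}C(a-t,b-t,c,M-t)\frac{\binom{a}{t}\binom{b}{t}t!}{\prod_{p=1}^{t}(2M+1-2p)}$ (empty sums $=0$), one has $P_{\mathrm{adj}}=A(k_i,k_j,m)$, $P_{\mathrm{cn}}(r)=C(k_i,k_j,k_r,m)$ and $P_{\mathrm{tri}}(r)=T(k_i,k_j,k_r,m)$, so that the two expressions above give $E[W_{ij}]$ explicitly in terms of the degrees and $m$.
   Context: Configuration model: given $G=(V,E)$ with $m$ edges and degrees $k_u$, each node $u$ is given $k_u$ stubs (half-edges), $2m$ in total; a perfect matching of the $2m$ stubs is chosen uniformly at random among all $\prod_{p=1}^{m}(2m+1-2p)$ perfect matchings, and each matched pair of stubs (attached to nodes $u$ and $v$) becomes an edge of the random multigraph $G'$. Degrees are preserved. Two distinct nodes $u,v$ are connected in $G'$ if at least one stub of $u$ is matched with a stub of $v$. A node $r\notin\{i,j\}$ is a common neighbour of $i$ and $j$ if $r$ is connected to both $i$ and $j$. Weight rule (evaluated in $G'$, with degrees $k_i,k_j\ge 1$): let $P_{ij}=\frac1{k_i}+\frac1{k_j}$ and $CN_{ij}=(\text{number of common neighbours of } i,j+1)P_{ij}$. Then $W_{ij}=\frac{CN_{ij}-P_{ij}}{4}$ if $i$ and $j$ are not connected; $W_{ij}=P_{ij}$ if $i,j$ are connected and ($k_i=1$ or $k_j=1$); $W_{ij}=2CN_{ij}+P_{ij}$ if $i,j$ are connected and $k_i>1$, $k_j>1$. *)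

(* Defs.v *)
From HB Require Import structures.
From mathcomp Require Import all_boot all_order all_algebra all_fingroup.
Set Implicit Arguments. Unset Strict Implicit. Unset Printing Implicit Defensive.
Import Order.TTheory GRing.Theory Num.Theory.
Local Open Scope ring_scope.

Section Config.
Variables (V : finType) (e : rel V).

Definition deg (u : V) : nat := #|[set v | e u v]|.

Definition edge_set : {set {set V}} :=
  [set E : {set V} | [exists u, exists v, e u v && (E == [set u; v])]].
Definition nedges : nat := #|edge_set|.

(* stubs (half-edges): node u owns k_u stubs *)
Definition stub := {u : V & 'I_(deg u)}.

(* perfect matchings of the stubs = fixed-point-free involutions *)
Definition matchings : {set {perm stub}} :=
  [set s : {perm stub} | [forall x, (s (s x) == x) && (s x != x)]].

Definition conn (s : {perm stub}) (u v : V) : bool :=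
  [exists x : stub, (tag x == u) && (tag (s x) == v)].

Definition ncn (s : {perm stub}) (i j : V) : nat :=
  #|[set r | [&& r != i, r != j, conn s i r & conn s j r]]|.

Variable R : realFieldType.

Definition Pij (i j : V) : R := (deg i)%:R^-1 + (deg j)%:R^-1.
Definition CNij (s : {perm stub}) (i j : V) : R := (ncn s i j).+1%:R * Pij i j.

Definition weight (s : {perm stub}) (i j : V) : R :=
  if ~~ conn s i j then (CNij s i j - Pij i j) / 4
  else if (deg i == 1%N) || (deg j == 1%N) then Pij i j
  else 2 * CNij s i j + Pij i j.

Definition Prob (ev : {perm stub} -> bool) : R :=
  #|[set s in matchings | ev s]|%:R / #|matchings|%:R.
Definition Expect (f : {perm stub} -> R) : R :=
  (\sum_(s in matchings) f s) / #|matchings|%:R.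

End Config.

Definition dprod (R : realFieldType) (t M : nat) : R :=
  \prod_(1 <= p < t.+1) (2 * M%:R + 1 - 2 * p%:R).

Definition Afun (R : realFieldType) (a b M : nat) : R :=
  \sum_(1 <= t < (minn a b).+1)
     (-1) ^+ t.+1 * ('C(a, t) * 'C(b, t) * t`!)%:R / dprod R t M.

Definition Cfun (R : realFieldType) (a b c M : nat) : R :=
  \sum_(1 <= t < (minn b c.-1).+1)
     (-1) ^+ t.+1 * Afun R a (c - t) (M - t)
       * ('C(c, t) * 'C(b, t) * t`!)%:R / dprod R t M.

Definition Tfun (R : realFieldType) (a b c M : nat) : R :=
  \sum_(1 <= t < (minn a.-1 b.-1).+1)
     (-1) ^+ t.+1 * Cfun R (a - t) (b - t) c (M - t)
       * ('C(a, t) * 'C(b, t) * t`!)%:R / dprod R t M.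
Arguments Prob {V} e R ev.
Arguments Expect {V} e {R} f.
Arguments weight {V e} R s i j.

(* Main.v *)
Require Import Defs.
From HB Require Import structures.
From mathcomp Require Import all_boot all_order all_algebra all_fingroup.
Import Order.TTheory GRing.Theory Num.Theory.
Local Open Scope ring_scope.
From mathcomp Require Import ring lra zify.
Set Implicit Arguments. Unset Strict Implicit. Unset Printing Implicit Defensive.
Local Close Scope ring_scope.

Section Core.
Variable S : finType.

Definition Mtb (D : {set S}) (s : {perm S}) : bool :=
  [forall x, if x \in D then (s (s x) == x) && (s x != x) else s x == x].
Definition Mt (D : {set S}) : {set {perm S}} := [set s | Mtb D s].

Definition ev (X Y : {set S}) (s : {perm S}) : bool := [exists x in X, s x \in Y].

Lemma MtE (D : {set S}) s : (s \in Mt D) = Mtb D s.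
Proof. by rewrite inE. Qed.

Lemma MtP (D : {set S}) (s : {perm S}) : reflect (forall x, if x \in D then (s (s x) = x) /\ (s x != x) else s x = x) (s \in Mt D).
Proof.
rewrite inE /Mtb; apply: (iffP forallP) => H x; have := H x; case: (x \in D).
- by case/andP => /eqP.
- by move/eqP.
- by case=> -> ->; rewrite eqxx.
- by move=> ->.
Qed.

Lemma Mt_out (D : {set S}) s x : s \in Mt D -> x \notin D -> s x = x.
Proof. by move/MtP/(_ x) => H /negbTE Hx; rewrite Hx in H. Qed.

Lemma Mt_neq (D : {set S}) s x : s \in Mt D -> x \in D -> s x != x.
Proof. by move/MtP/(_ x) => H Hx; rewrite Hx in H; case: H. Qed.

Lemma Mt_inv (D : {set S}) s x : s \in Mt D -> s (s x) = x.
Proof.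
move=> sM; case Hx: (x \in D); first by move/MtP/(_ x): sM; rewrite Hx; case.
by rewrite !(Mt_out sM) ?Hx.
Qed.

Lemma Mt_in (D : {set S}) s x : s \in Mt D -> x \in D -> s x \in D.
Proof.
move=> sM xD; apply/negP => /negP H.
have := Mt_inv x sM; rewrite (Mt_out sM H) => E.
by move: (Mt_neq sM xD); rewrite E eqxx.
Qed.

Lemma pair_bij (D : {set S}) x y (P : pred {perm S}) : x \in D -> y \in D -> x != y ->
  #|[set s in Mt D | (s x == y) && P s]| =
  #|[set s in Mt (D :\ x :\ y) | P (s * tperm x y)%g]|.
Proof.
move=> xD yD xy.
set t := tperm x y.
have tt s : (s * t * t = s)%g.
  by apply/permP => z; rewrite !permM tpermK.
rewrite -[X in _ = X](card_imset _ (mulIg t)); apply: eq_card => s.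
rewrite !inE -!MtE; apply/idP/idP.
- case/andP => sM /andP [/eqP sx Ps].
  apply/imsetP; exists (s * t)%g; last by rewrite tt.
  rewrite inE tt Ps andbT; apply/MtP => z.
  have sy : s y = x by rewrite -sx (Mt_inv _ sM).
  rewrite !inE; case: (eqVneq z y) => [->|zy] /=.
    by rewrite permM sy tpermL.
  case: (eqVneq z x) => [->|zx] /=.
    by rewrite permM sx tpermR.
  case zD: (z \in D).
    have szx : x != s z by apply: contraNneq zy => szx; rewrite -sx szx (Mt_inv _ sM).
    have szy : y != s z by apply: contraNneq zx => szy; rewrite -sy szy (Mt_inv _ sM).
    rewrite !permM (tpermD szx szy) (Mt_inv _ sM) tpermD 1?eq_sym //.
    by rewrite eq_sym (Mt_neq sM) ?zD.
  by rewrite permM (Mt_out sM) ?zD // tpermD // eq_sym.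
- case/imsetP => s' /[!inE] /andP [sM Ps] ->; rewrite Ps andbT -MtE; rewrite -MtE in sM.
  have s'x : s' x = x by apply: (Mt_out sM); rewrite !inE eqxx /= andbF.
  have s'y : s' y = y by apply: (Mt_out sM); rewrite !inE eqxx.
  rewrite permM s'x tpermL eqxx andbT.
  apply/MtP => z; case: (eqVneq z y) => [->|zy].
    by rewrite yD !permM s'y tpermR s'x tpermL; split; rewrite // eq_sym.
  case: (eqVneq z x) => [->|zx].
    by rewrite xD !permM s'x tpermL s'y tpermR; split; rewrite // eq_sym.
  case zD: (z \in D).
    have zD' : z \in D :\ x :\ y by rewrite !inE zy zx zD.
    have := Mt_in sM zD'; rewrite !inE => /andP [s'zy /andP [s'zx _]].
    have h1 : x != s' z by rewrite eq_sym.
    have h2 : y != s' z by rewrite eq_sym.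
    have h3 : x != z by rewrite eq_sym.
    have h4 : y != z by rewrite eq_sym.
    rewrite !permM (tpermD h1 h2) (Mt_inv _ sM) (tpermD h3 h4); split=> //.
    exact: (Mt_neq sM zD').
  have h3 : x != z by rewrite eq_sym.
  have h4 : y != z by rewrite eq_sym.
  rewrite permM (Mt_out sM) ?(tpermD h3 h4) //.
  by rewrite !inE zD !andbF.
Qed.


Fixpoint ff (n : nat) : nat :=
  match n with 0 => 1%N | 1 => 0%N | (k.+1 as k1).+1 => (k1 * ff k)%N end.

Lemma card_part (T J : finType) (A : {set T}) (g : T -> J) (B : {set J}) :
  (forall s, s \in A -> g s \in B) ->
  #|A| = (\sum_(y in B) #|[set s in A | g s == y]|)%N.
Proof.
move=> H; rewrite -sum1_card (partition_big g (mem B)) //=.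
apply: eq_bigr => y _; rewrite -sum1_card; apply: eq_bigl => s; by rewrite inE.
Qed.

Lemma card_split (T : finType) (M : {set T}) (P Q : pred T) :
  #|[set s in M | P s]| = (#|[set s in M | P s && Q s]| + #|[set s in M | P s && ~~ Q s]|)%N.
Proof.
rewrite -(cardsID [set s | Q s]); congr (_ + _)%N; apply: eq_card => s; rewrite !inE;
  by case: (s \in M); case: (P s); case: (Q s).
Qed.

Lemma card_Mt n : forall D : {set S}, #|D| = n -> #|Mt D| = ff n.
Proof.
elim/ltn_ind: n => n IH D Dn.
case: n IH Dn => [|[|n]] IH Dn.
- move/eqP: Dn; rewrite cards_eq0 => /eqP ->.
  apply/eqP/cards1P; exists 1%g; apply/setP => s; rewrite inE; apply/idP/eqP.
    by move=> sM; apply/permP => x; rewrite perm1 (Mt_out sM) ?inE.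
  by move=> ->; apply/MtP => x; rewrite inE perm1.
- move/eqP/cards1P: Dn => [x ->] /=; apply/eqP; rewrite cards_eq0 -[_ == _]negbK; apply/negP => /set0Pn [s sM].
  have := Mt_in sM (set11 x); rewrite inE => /eqP E.
  by move: (Mt_neq sM (set11 x)); rewrite E eqxx.
- have : (0 < #|D|)%N by rewrite Dn.
  case/card_gt0P => x xD.
  rewrite (card_part (g := fun s : {perm S} => s x) (B := D :\ x)); last first.
    by move=> s sM; rewrite !inE (Mt_neq sM xD) (Mt_in sM xD).
  have Dx : #|D :\ x| = n.+1 by move: Dn; rewrite (cardsD1 x) xD add1n => -[].
  rewrite (eq_bigr (fun _ => ff n)).
    by rewrite sum_nat_const Dx.
  move=> y /[!inE] /andP [yx yD].
  transitivity #|[set s in Mt D | (s x == y) && predT s]|.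
    by apply: eq_card => s; rewrite !inE andbT.
  rewrite pair_bij // 1?eq_sym //.
  rewrite (_ : #|_| = #|Mt (D :\ x :\ y)|); last by apply: eq_card => s; rewrite !inE andbT.
  rewrite (IH n) //.
  by move: Dx; rewrite (cardsD1 y) !inE yx yD add1n => -[].
Qed.

End Core.

Definition CC a b t := ('C(a, t) * 'C(b, t) * t`!)%N.

Lemma CC_rec a b t : CC a.+1 b t.+1 = (CC a b t.+1 + b * CC a b.-1 t)%N.
Proof.
rewrite /CC -!mulnA !bin_ffact ffactnS binS mulnDl; congr (_ + _)%N.
by rewrite mulnCA.
Qed.

Lemma CC0 a b : CC a b 0 = 1%N.
Proof. by rewrite /CC !bin0. Qed.

Lemma CC_small a b t : (a < t)%N -> CC a b t = 0%N.
Proof. by move=> H; rewrite /CC bin_small. Qed.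

Section IE.
Variables (S : finType) (R : realFieldType).
Local Open Scope ring_scope.

Lemma ev0 (Y : {set S}) s : ev set0 Y s = false.
Proof. by apply/existsP => -[x]; rewrite inE. Qed.

Lemma ev_split (X Y : {set S}) x0 s : x0 \in X -> ev X Y s = ev (X :\ x0) Y s || (s x0 \in Y).
Proof.
move=> x0X; apply/existsP/orP.
- case=> x /andP [xX sxY]; case: (eqVneq x x0) => [<-|xx0]; first by right.
  by left; apply/existsP; exists x; rewrite !inE xx0 xX.
- case=> [/existsP [x /andP []]|H]; first by rewrite !inE => /andP [_ xX] H; exists x; rewrite xX.
  by exists x0; rewrite x0X.
Qed.

Lemma ie_alg (h : nat -> R) a b :
  \sum_(0 <= t < a.+2) (-1) ^+ t * (CC a.+1 b t)%:R * h t =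
  \sum_(0 <= t < a.+1) (-1) ^+ t * (CC a b t)%:R * h t
  - (\sum_(0 <= t < a.+1) (-1) ^+ t * (CC a b.-1 t)%:R * h t.+1) *+ b.
Proof.
have -> : \sum_(0 <= t < a.+1) (-1) ^+ t * (CC a b t)%:R * h t =
          \sum_(0 <= t < a.+2) (-1) ^+ t * (CC a b t)%:R * h t.
  by rewrite [in RHS]big_nat_recr //= CC_small // mulr0 mul0r addr0.
rewrite !(big_nat_recl a.+1) // !CC0 -addrA; congr (_ + _).
rewrite -sumrMnl -sumrN -big_split /=; apply: eq_bigr => t _.
rewrite CC_rec natrD natrM -mulr_natr !exprS; ring.
Qed.


Lemma ie_core (E : pred {perm S}) a : forall (D X Y : {set S}) (h : nat -> R),
  #|X| = a -> X \subset D -> Y \subset D -> (forall z, z \in X -> z \in Y -> False) ->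
  (forall (s : {perm S}) x y, x \in X -> y \in Y -> s x = x -> s y = y -> E (s * tperm x y)%g = E s) ->
  (forall X' Y' : {set S}, X' \subset X -> Y' \subset Y -> #|X'| = #|Y'| ->
       (#|[set s in Mt (D :\: (X' :|: Y')) | E s]|)%:R = h #|X'|) ->
  (#|[set s in Mt D | E s && ~~ ev X Y s]|)%:R =
    \sum_(0 <= t < a.+1) (-1) ^+ t * (CC a #|Y| t)%:R * h t.
Proof.
elim: a => [|a IH] D X Y h Xa XD YD dXY Einv Hh.
  move/eqP: Xa; rewrite cards_eq0 => /eqP X0; subst X.
  rewrite big_nat1 CC0 expr0 !mul1r.
  have := Hh set0 set0 (sub0set _) (sub0set _) erefl; rewrite cards0 setU0 setD0 => <-.
  by congr (_%:R); apply: eq_card => s; rewrite !inE ev0 andbT.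
have : (0 < #|X|)%N by rewrite Xa.
case/card_gt0P => x0 x0X.
set X' := X :\ x0.
have X'a : #|X'| = a by move: Xa; rewrite (cardsD1 x0) x0X add1n => -[].
have X'X : X' \subset X := subD1set X x0.
have HB := IH D X' Y h X'a (subset_trans X'X XD) YD
  (fun z zX => dXY z (subsetP X'X z zX))
  (fun s x y xX => Einv s x y (subsetP X'X x xX))
  (fun X'' Y'' sX => Hh X'' Y'' (subset_trans sX X'X)).
have split := card_split (Mt D) (fun s => E s && ~~ ev X' Y s) (fun s => s x0 \in Y).
have -> : #|[set s in Mt D | E s && ~~ ev X Y s]| =
          #|[set s in Mt D | (E s && ~~ ev X' Y s) && ~~ (s x0 \in Y)]|.
  by apply: eq_card => s; rewrite !inE (ev_split _ _ x0X) negb_or !andbA.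
have -> : (#|[set s in Mt D | (E s && ~~ ev X' Y s) && ~~ (s x0 \in Y)]|)%:R =
          (#|[set s in Mt D | E s && ~~ ev X' Y s]|)%:R -
          (#|[set s in Mt D | (E s && ~~ ev X' Y s) && (s x0 \in Y)]|)%:R :> R.
  by rewrite split natrD addrC addKr.
rewrite HB.
rewrite (card_part (g := fun s : {perm S} => s x0) (B := Y)); last first.
  by move=> s; rewrite !inE => /andP [_ /andP [_ ->]].
rewrite natr_sum.
have x0D : x0 \in D := subsetP XD x0 x0X.
rewrite (eq_bigr (fun _ => \sum_(0 <= t < a.+1) (-1) ^+ t * (CC a #|Y|.-1 t)%:R * h t.+1)).
  by rewrite sumr_const ie_alg.
move=> y yY.
have yD : y \in D := subsetP YD y yY.
have x0y : x0 != y by apply/eqP => E0; subst y; exact: dXY x0 x0X yY.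
set D'' := D :\ x0 :\ y.
transitivity ((#|[set s in Mt D | (s x0 == y) && (E s && ~~ ev X' Y s)]|)%:R : R).
  congr (_%:R); apply: eq_card => s; rewrite !inE.
  case: (eqVneq (s x0) y) => [E0|]; last by rewrite !andbF /=; case: (Mtb D s).
  by rewrite E0 yY /= !andbT; case: (Mtb D s); case: (E s); case: (ev X' Y s).
rewrite pair_bij //.
have Y'c : #|Y :\ y| = #|Y|.-1 by rewrite [in RHS](cardsD1 y) yY add1n.
rewrite -Y'c.
have X'D : forall x, x \in X' -> x \in D''.
  move=> x; rewrite !inE => /andP [xx0 xX].
  have xy : x != y by apply/eqP => xy; subst x; exact: dXY y xX yY.
  by rewrite xx0 xy (subsetP XD x xX).
have YD' : forall z, z \in Y :\ y -> z \in D''.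
  move=> z; rewrite !inE => /andP [zy zY].
  have zx : z != x0 by apply/eqP => zx; subst z; exact: dXY x0 x0X zY.
  by rewrite zy zx (subsetP YD z zY).
transitivity ((#|[set s in Mt D'' | E s && ~~ ev X' (Y :\ y) s]|)%:R : R).
  congr (_%:R); apply: eq_card => s; rewrite !inE -!MtE.
  case sM: (s \in Mt D'') => //=.
  have sx0 : s x0 = x0 by apply: (Mt_out sM); rewrite !inE eqxx /= andbF.
  have sy : s y = y by apply: (Mt_out sM); rewrite !inE eqxx.
  rewrite (Einv s x0 y x0X yY sx0 sy); congr (_ && ~~ _).
  apply/existsP/existsP => -[x /andP [xX' H]]; exists x; rewrite xX' /=; move: H;
    have := Mt_in sM (X'D x xX'); rewrite !inE => /andP [sxy /andP [sxx0 _]];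
    rewrite permM tpermD 1?eq_sym //.
  by move=> ->; rewrite eq_sym sxy.
  by case/andP.
apply: IH.
- by [].
- by apply/subsetP => x; apply: X'D.
- by apply/subsetP => z; apply: YD'.
- by move=> z; rewrite !inE => /andP [_ zX] /andP [_ zY]; exact: dXY z zX zY.
- move=> s x y' xX yY'; apply: Einv; first exact: (subsetP X'X).
  by move: yY'; rewrite inE => /andP [].
- move=> X'' Y'' sX sY cXY.
  have x0X'' : x0 \notin X''.
    by apply/negP => /(subsetP sX); rewrite !inE eqxx.
  have yY'' : y \notin Y''.
    by apply/negP => /(subsetP sY); rewrite !inE eqxx.
  have := Hh (x0 |: X'') (y |: Y'').
  rewrite !cardsU1 x0X'' yY'' cXY add1n => <- //.
  + congr (_%:R); apply: eq_card => s; rewrite !inE; congr (_ && _).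
    rewrite -!MtE; congr (s \in Mt _); apply/setP => z; rewrite !inE.
    by case: (z == x0); case: (z == y); case: (z \in X''); case: (z \in Y''); case: (z \in D).
  + apply/subsetP => z; rewrite !inE => /orP [/eqP -> // | /(subsetP sX)].
    by rewrite inE => /andP [].
  + apply/subsetP => z; rewrite !inE => /orP [/eqP -> // | /(subsetP sY)].
    by rewrite inE => /andP [].
Qed.


Lemma ie_pos (E : pred {perm S}) a (D X Y : {set S}) (h : nat -> R) :
  #|X| = a -> X \subset D -> Y \subset D -> (forall z, z \in X -> z \in Y -> False) ->
  (forall (s : {perm S}) x y, x \in X -> y \in Y -> s x = x -> s y = y -> E (s * tperm x y)%g = E s) ->
  (forall X' Y' : {set S}, X' \subset X -> Y' \subset Y -> #|X'| = #|Y'| ->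
       (#|[set s in Mt (D :\: (X' :|: Y')) | E s]|)%:R = h #|X'|) ->
  (#|[set s in Mt D | E s && ev X Y s]|)%:R =
    \sum_(1 <= t < a.+1) (-1) ^+ t.+1 * (CC a #|Y| t)%:R * h t.
Proof.
move=> Xa XD YD dXY Einv Hh.
have H0 := Hh set0 set0 (sub0set _) (sub0set _) erefl.
rewrite cards0 setU0 setD0 in H0.
have HC := ie_core Xa XD YD dXY Einv Hh.
have := card_split (Mt D) E (ev X Y).
move/(congr1 (fun n => n%:R : R)); rewrite natrD H0 => H1.
have -> : (#|[set s in Mt D | E s && ev X Y s]|)%:R = h 0 - (#|[set s in Mt D | E s && ~~ ev X Y s]|)%:R :> R.
  by rewrite H1 addrK.
rewrite HC big_nat_recl // CC0 expr0 !mul1r opprD addrA subrr add0r big_add1 /= -sumrN.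
by apply: eq_bigr => t _; rewrite !exprS; ring.
Qed.

Lemma ev_dropL (X X' Z : {set S}) (s : {perm S}) :
  (forall x, x \in X' -> s x \notin Z) -> ev X Z s = ev (X :\: X') Z s.
Proof.
move=> H; apply/existsP/existsP => -[x /andP [xX sxZ]]; exists x; rewrite sxZ andbT //.
  by rewrite inE xX andbT; apply: contraTN sxZ => /H.
by move: xX; rewrite inE => /andP [].
Qed.

Lemma ev_dropR (X Z Z' : {set S}) (s : {perm S}) :
  (forall x, x \in X -> s x \notin Z') -> ev X Z s = ev X (Z :\: Z') s.
Proof.
move=> H; apply/existsP/existsP => -[x /andP [xX sxZ]]; exists x; rewrite xX //=.
  by rewrite inE sxZ andbT H.
by move: sxZ; rewrite inE => /andP [].
Qed.

Lemma ev_tpermA (X Z : {set S}) (s : {perm S}) x0 y :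
  x0 \notin Z -> y \notin Z -> ev X Z (s * tperm x0 y)%g = ev X Z s.
Proof.
move=> x0Z yZ; apply: eq_existsb => x; rewrite permM; congr (_ && _).
case: tpermP => [->|->|//]; by rewrite (negbTE x0Z) (negbTE yZ).
Qed.

Lemma ev_tpermB (X Z : {set S}) (s : {perm S}) x0 y :
  x0 \notin X -> y \notin X -> s x0 = x0 -> s y = y -> ev X Z (s * tperm x0 y)%g = ev X Z s.
Proof.
move=> x0X yX sx0 sy; apply: eq_existsb => x; rewrite permM.
case xX: (x \in X) => //=.
have h1 : x0 != s x by apply/eqP => E0; move: x0X; rewrite -sx0 in E0; rewrite (perm_inj E0) xX.
have h2 : y != s x by apply/eqP => E0; move: yX; rewrite -sy in E0; rewrite (perm_inj E0) xX.
by rewrite tpermD.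
Qed.

Lemma cardD2 (D X' Y' : {set S}) :
  X' \subset D -> Y' \subset D -> (forall z, z \in X' -> z \in Y' -> False) -> #|X'| = #|Y'| ->
  #|D :\: (X' :|: Y')| = (#|D| - 2 * #|X'|)%N.
Proof.
move=> sX sY dXY c.
have I0 : X' :&: Y' = set0.
  by apply/setP => z; rewrite !inE; apply/negbTE/negP => /andP [a b]; exact: dXY z a b.
rewrite cardsD (setIidPr _); last by rewrite subUset sX sY.
by rewrite cardsU I0 cards0 subn0 -c mul2n -addnn.
Qed.


Definition Acnt a b n : R :=
  \sum_(1 <= t < a.+1) (-1) ^+ t.+1 * (CC a b t)%:R * (ff (n - 2 * t))%:R.
Definition Ccnt a b c n : R :=
  \sum_(1 <= t < b.+1) (-1) ^+ t.+1 * (CC b c t)%:R * Acnt a (c - t) (n - 2 * t).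
Definition Tcnt a b c n : R :=
  \sum_(1 <= t < a.+1) (-1) ^+ t.+1 * (CC a b t)%:R * Ccnt (a - t) (b - t) c (n - 2 * t).

Lemma cntA (D X Y : {set S}) :
  X \subset D -> Y \subset D -> (forall z, z \in X -> z \in Y -> False) ->
  (#|[set s in Mt D | ev X Y s]|)%:R = Acnt #|X| #|Y| #|D|.
Proof.
move=> XD YD dXY.
rewrite (_ : #|[set s in Mt D | ev X Y s]| = #|[set s in Mt D | predT s && ev X Y s]|); last first.
  by apply: eq_card => s; rewrite !inE.
apply: ie_pos => //.
move=> X' Y' sX sY c.
rewrite (_ : #|[set s in Mt _ | predT s]| = #|Mt (D :\: (X' :|: Y'))|); last first.
  by apply: eq_card => s; rewrite !inE andbT.
rewrite (card_Mt (cardD2 (subset_trans sX XD) (subset_trans sY YD) _ c)) //.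
by move=> z /(subsetP sX) a /(subsetP sY) b; exact: dXY z a b.
Qed.


Lemma cardsDS (Z Z' : {set S}) : Z' \subset Z -> #|Z :\: Z'| = (#|Z| - #|Z'|)%N.
Proof. by move=> sZ; rewrite cardsD (setIidPr sZ). Qed.

Lemma cntC (D X Y Z : {set S}) :
  X \subset D -> Y \subset D -> Z \subset D ->
  (forall z, z \in X -> z \in Y -> False) ->
  (forall z, z \in X -> z \in Z -> False) ->
  (forall z, z \in Y -> z \in Z -> False) ->
  (#|[set s in Mt D | ev X Z s && ev Y Z s]|)%:R = Ccnt #|X| #|Y| #|Z| #|D|.
Proof.
move=> XD YD ZD dXY dXZ dYZ.
rewrite /Ccnt; apply: (ie_pos (E := ev X Z) (h := fun t => Acnt #|X| (#|Z| - t) (#|D| - 2 * t))) => //.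
  move=> s y z yY zZ sy sz; apply: ev_tpermB => //.
    by apply/negP => yX; exact: dXY y yX yY.
  by apply/negP => zX; exact: dXZ z zX zZ.
move=> Y' Z' sY sZ c.
have dYZ' : forall z, z \in Y' -> z \in Z' -> False.
  by move=> z /(subsetP sY) a /(subsetP sZ) b; exact: dYZ z a b.
set D' := D :\: (Y' :|: Z').
have XD' : X \subset D'.
  apply/subsetP => x xX; rewrite !inE (subsetP XD x xX) andbT negb_or.
  apply/andP; split; apply/negP.
    by move/(subsetP sY) => xY; exact: dXY x xX xY.
  by move/(subsetP sZ) => xZ; exact: dXZ x xX xZ.
have ZD' : Z :\: Z' \subset D'.
  apply/subsetP => z; rewrite !inE => /andP [zZ' zZ]; rewrite (subsetP ZD z zZ) (negbTE zZ') andbT orbF.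
  by apply/negP => /(subsetP sY) zY; exact: dYZ z zY zZ.
rewrite (_ : #|[set s in Mt D' | ev X Z s]| = #|[set s in Mt D' | ev X (Z :\: Z') s]|); last first.
  apply: eq_card => s; rewrite !inE -!MtE.
  case sM: (s \in Mt D') => //=; apply: ev_dropR => x xX.
  by have := Mt_in sM (subsetP XD' x xX); rewrite !inE negb_or => /andP [/andP [_ ->]].
rewrite (cntA XD' ZD'); last first.
  by move=> z zX; rewrite inE => /andP [_ zZ]; exact: dXZ z zX zZ.
by rewrite cardsDS // /D' (cardD2 (subset_trans sY YD) (subset_trans sZ ZD) dYZ' c) c.
Qed.


Lemma cntT (D X Y Z : {set S}) :
  X \subset D -> Y \subset D -> Z \subset D ->
  (forall z, z \in X -> z \in Y -> False) ->
  (forall z, z \in X -> z \in Z -> False) ->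
  (forall z, z \in Y -> z \in Z -> False) ->
  (#|[set s in Mt D | (ev X Z s && ev Y Z s) && ev X Y s]|)%:R = Tcnt #|X| #|Y| #|Z| #|D|.
Proof.
move=> XD YD ZD dXY dXZ dYZ.
rewrite /Tcnt; apply: (ie_pos (E := fun s => ev X Z s && ev Y Z s)
   (h := fun t => Ccnt (#|X| - t) (#|Y| - t) #|Z| (#|D| - 2 * t))) => //.
  move=> s x y xX yY sx sy.
  have xZ : x \notin Z by apply/negP => xZ; exact: dXZ x xX xZ.
  have yZ : y \notin Z by apply/negP => yZ; exact: dYZ y yY yZ.
  by rewrite !(ev_tpermA _ _ xZ yZ).
move=> X' Y' sX sY c.
have dXY' : forall z, z \in X' -> z \in Y' -> False.
  by move=> z /(subsetP sX) a /(subsetP sY) b; exact: dXY z a b.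
set D' := D :\: (X' :|: Y').
have XD' : X :\: X' \subset D'.
  apply/subsetP => x; rewrite !inE => /andP [xX' xX]; rewrite (subsetP XD x xX) (negbTE xX') andbT /=.
  by apply/negP => /(subsetP sY) xY; exact: dXY x xX xY.
have YD' : Y :\: Y' \subset D'.
  apply/subsetP => x; rewrite !inE => /andP [xY' xY]; rewrite (subsetP YD x xY) (negbTE xY') andbT orbF.
  by apply/negP => /(subsetP sX) xX; exact: dXY x xX xY.
have ZD' : Z \subset D'.
  apply/subsetP => z zZ; rewrite !inE (subsetP ZD z zZ) andbT negb_or; apply/andP; split; apply/negP.
    by move/(subsetP sX) => zX; exact: dXZ z zX zZ.
  by move/(subsetP sY) => zY; exact: dYZ z zY zZ.
rewrite (_ : #|[set s in Mt D' | ev X Z s && ev Y Z s]| =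
             #|[set s in Mt D' | ev (X :\: X') Z s && ev (Y :\: Y') Z s]|); last first.
  apply: eq_card => s; rewrite !inE -!MtE.
  case sM: (s \in Mt D') => //=; congr (_ && _).
    apply: ev_dropL => x xX'; rewrite (Mt_out sM); last by rewrite !inE xX'.
    by apply/negP => xZ; exact: dXZ x (subsetP sX x xX') xZ.
  apply: ev_dropL => x xY'; rewrite (Mt_out sM); last by rewrite !inE xY' orbT.
  by apply/negP => xZ; exact: dYZ x (subsetP sY x xY') xZ.
rewrite (cntC XD' YD' ZD').
- by rewrite /D' (cardD2 (subset_trans sX XD) (subset_trans sY YD) dXY' c) !cardsDS // c.
- by move=> z; rewrite !inE => /andP [_ a] /andP [_ b]; exact: dXY z a b.
- by move=> z; rewrite !inE => /andP [_ a] b; exact: dXZ z a b.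
- by move=> z; rewrite !inE => /andP [_ a] b; exact: dYZ z a b.
Qed.

End IE.

Section Alg.
Local Open Scope ring_scope.
Variable R : realFieldType.

Lemma ff_even n : (0 < ff (2 * n))%N.
Proof. by elim: n => // n IH; rewrite mulnS /= muln_gt0. Qed.

Lemma ff_dprod M t : (t <= M)%N ->
  (ff (2 * M))%:R = Defs.dprod R t M * (ff (2 * M - 2 * t))%:R :> R.
Proof.
elim: t => [|t IH] tM.
  by rewrite /Defs.dprod big_geq // mul1r subn0.
rewrite IH ?(leq_trans (leqnSn t)) //.
have E : (2 * M - 2 * t = (2 * M - 2 * t.+1).+2)%N by lia.
rewrite E /= /Defs.dprod (big_nat_recr t.+1) //= natrM.
have H : ((2 * M - 2 * t.+1).+1 + 2 * t.+1 = 2 * M + 1)%N by lia.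
have H' : ((2 * M - 2 * t.+1).+1)%:R + 2 * (t.+1)%:R = 2 * M%:R + 1 :> R.
  by rewrite -[2 : R]/(2%:R) -!natrM -natrD H natrD natrM.
by rewrite -H'; ring.
Qed.

Lemma dprod_neq0 M t : (t <= M)%N -> Defs.dprod R t M != 0.
Proof.
move=> tM; apply/negP => /eqP d0.
have := ff_dprod tM; rewrite d0 mul0r => /eqP; rewrite pnatr_eq0.
by rewrite -[_ == _]negbK -lt0n ff_even.
Qed.

Lemma sum_trunc (F : nat -> R) m n k : (m <= n)%N -> (n <= k)%N ->
  (forall t, (n <= t < k)%N -> F t = 0) ->
  \sum_(m <= t < k) F t = \sum_(m <= t < n) F t.
Proof.
move=> mn nk H; rewrite (big_cat_nat mn nk) /= [X in _ + X]big_nat_cond [X in _ + X]big1 ?addr0 //.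
by move=> t /andP [Ht _]; apply: H.
Qed.

Lemma Afun_eq a b M : (a + b <= 2 * M)%N ->
  Afun R a b M * (ff (2 * M))%:R = Acnt R a b (2 * M).
Proof.
move=> H; rewrite /Afun /Acnt mulr_suml.
rewrite [RHS](@sum_trunc _ _ (minn a b).+1) //; last 2 first.
- by rewrite ltnS geq_minl.
- move=> t /andP [h1 h2]; rewrite /CC (@bin_small b t) ?muln0 ?mul0n ?mulr0 ?mul0r //.
  lia.
apply: eq_big_nat => t /andP [t1 t2].
have tM : (t <= M)%N by move: t2; rewrite ltnS leq_min; lia.
rewrite (ff_dprod tM) /CC.
have := dprod_neq0 tM; set d := Defs.dprod R t M => dn0.
by field.
Qed.


Lemma Acnt0l b n : Acnt R 0 b n = 0.
Proof. by rewrite /Acnt big_geq. Qed.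

Lemma Acnt0r a n : Acnt R a 0 n = 0.
Proof.
rewrite /Acnt big_nat_cond big1 // => t /andP [/andP [t1 _] _].
by rewrite /CC bin0n eqn0Ngt t1 muln0 mul0n mulr0 mul0r.
Qed.

Lemma Ccnt0l b c n : Ccnt R 0 b c n = 0.
Proof. by rewrite /Ccnt big1 // => t _; rewrite Acnt0l mulr0. Qed.

Lemma Ccnt0m a c n : Ccnt R a 0 c n = 0.
Proof. by rewrite /Ccnt big_geq. Qed.

Lemma Cfun_eq a b c M : (a + b + c <= 2 * M)%N ->
  Cfun R a b c M * (ff (2 * M))%:R = Ccnt R a b c (2 * M).
Proof.
move=> H; rewrite /Cfun /Ccnt mulr_suml.
rewrite [RHS](@sum_trunc _ _ (minn b c.-1).+1) //; last 2 first.
- by rewrite ltnS geq_minl.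
- move=> t /andP [h1 h2].
  have [tc|ct] := eqVneq t c.
    by rewrite -tc subnn Acnt0r mulr0.
  rewrite /CC (@bin_small c t) ?muln0 ?mul0n ?mulr0 ?mul0r //; lia.
apply: eq_big_nat => t /andP [t1 t2].
have tM : (t <= M)%N by lia.
rewrite (ff_dprod tM) /CC.
have E : (2 * M - 2 * t = 2 * (M - t))%N by lia.
have HA := @Afun_eq a (c - t) (M - t) ltac:(lia).
rewrite E -HA.
have := dprod_neq0 tM; set d := Defs.dprod R t M => dn0.
rewrite (mulnC 'C(b, t)).
by field.
Qed.

Lemma Tfun_eq a b c M : (a + b + c <= 2 * M)%N ->
  Tfun R a b c M * (ff (2 * M))%:R = Tcnt R a b c (2 * M).
Proof.
move=> H; rewrite /Tfun /Tcnt mulr_suml.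
rewrite [RHS](@sum_trunc _ _ (minn a.-1 b.-1).+1) //; last 2 first.
- rewrite ltnS; lia.
- move=> t /andP [h1 h2].
  have [ta|nta] := eqVneq t a.
    by rewrite -ta subnn Ccnt0l mulr0.
  have [tb|bt] := eqVneq t b.
    by rewrite -tb subnn Ccnt0m mulr0.
  rewrite /CC (@bin_small b t) ?muln0 ?mul0n ?mulr0 ?mul0r //; lia.
apply: eq_big_nat => t /andP [t1 t2].
have tM : (t <= M)%N by lia.
rewrite (ff_dprod tM) /CC.
have E : (2 * M - 2 * t = 2 * (M - t))%N by lia.
have HA := @Cfun_eq (a - t) (b - t) c (M - t) ltac:(lia).
rewrite E -HA.
have := dprod_neq0 tM; set d := Defs.dprod R t M => dn0.
by field.
Qed.

End Alg.

Section Graph.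
Variables (V : finType) (e : rel V).
Hypotheses (e_sym : symmetric e) (e_irr : irreflexive e).

Definition stubs (u : V) : {set stub e} := [set x | tag x == u].

Lemma card_stubs u : #|stubs u| = deg e u.
Proof.
have -> : stubs u = [set Tagged (fun v => 'I_(deg e v)) k | k : 'I_(deg e u)].
  apply/setP => x; rewrite !inE; apply/idP/imsetP.
    by case: x => v k /= /eqP vu; subst v; exists k.
  by case=> k _ ->.
rewrite card_imset ?card_ord // => k1 k2 H.
by rewrite -(tagged_asE (u := Tagged (fun v => 'I_(deg e v)) k1) k1) {2}H tagged_asE.
Qed.

Lemma handshake : (\sum_(u : V) deg e u)%N = (2 * nedges e)%N.
Proof.
pose P := [set p : V * V | e p.1 p.2].
have H1 : (\sum_(u : V) deg e u)%N = #|P|.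
  rewrite (card_part (g := fun p : V * V => p.1) (B := [set: V])) //.
  apply: eq_big => [u|u _]; first by rewrite inE.
  rewrite /deg.
  have inj : injective (pair u : V -> V * V) by move=> v w [].
  rewrite -(card_imset _ inj); apply: eq_card => -[a b].
  rewrite !inE; apply/idP/andP.
    by case/imsetP => v; rewrite inE => evu [-> ->].
  by case=> eab /eqP /= au; subst a; apply/imsetP; exists b; rewrite ?inE.
rewrite H1 (card_part (g := fun p : V * V => [set p.1; p.2]) (B := edge_set e)); last first.
  move=> [a b]; rewrite !inE /= => eab; apply/existsP; exists a; apply/existsP; exists b.
  by rewrite eab eqxx.
rewrite /nedges mulnC -sum_nat_const; apply: eq_bigr => E; rewrite inE.
case/existsP => u0 /existsP [v0 /andP [euv /eqP ->]].
have uv : u0 != v0 by apply: contraTneq euv => ->; rewrite e_irr.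
rewrite (_ : [set _ in P | _] = [set (u0, v0); (v0, u0)]).
  by rewrite cards2 xpair_eqE (negbTE uv).
apply/setP => -[a b]; rewrite !inE /= xpair_eqE.
apply/idP/idP.
- case/andP => eab /eqP Eab.
  have ab : a != b by apply: contraTneq eab => ->; rewrite e_irr.
  have ha : a \in [set u0; v0] by rewrite -Eab !inE eqxx.
  have hb : b \in [set u0; v0] by rewrite -Eab !inE eqxx orbT.
  move: ha hb ab; rewrite !inE.
  by case/orP => /eqP ->; case/orP => /eqP ->; rewrite ?eqxx ?orbT ?andbT //= (negbTE uv).
- rewrite xpair_eqE; case/orP => /andP [/eqP -> /eqP ->]; first by rewrite euv eqxx.
  by rewrite e_sym euv setUC eqxx.
Qed.

Lemma card_stub : #|[set: stub e]| = (2 * nedges e)%N.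
Proof.
rewrite cardsT -handshake.
rewrite -cardsT (card_part (g := fun x : stub e => tag x) (B := [set: V])) //.
apply: eq_big => [u|u _]; first by rewrite inE.
rewrite -card_stubs; apply: eq_card => x; by rewrite !inE.
Qed.

Lemma matchingsE : matchings e = Mt [set: stub e].
Proof. by apply/setP => s; rewrite !inE /Mtb; apply: eq_forallb => x; rewrite inE. Qed.

Lemma connE s u v : conn s u v = ev (stubs u) (stubs v) s.
Proof. by apply: eq_existsb => x; rewrite !inE. Qed.


Lemma stubs_disj u v z : u != v -> z \in stubs u -> z \in stubs v -> False.
Proof. by move=> uv; rewrite !inE => /eqP -> /eqP E; rewrite E eqxx in uv. Qed.

Lemma ncn0 s i j : s \in Mt [set: stub e] -> (deg e i = 1%N \/ deg e j = 1%N) ->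
  conn s i j -> ncn s i j = 0%N.
Proof.
move=> sM Hd cij; apply/eqP; rewrite cards_eq0; apply/eqP/setP => r; rewrite !inE.
apply/negbTE/negP => /and4P [ri rj cir cjr].
move: cij cir cjr; rewrite !connE => /existsP [x /andP [xi sxj]] /existsP [x' /andP [x'i sx'r]]
  /existsP [y /andP [yj syr]].
case: Hd => H.
- have : (#|stubs i| <= 1)%N by rewrite card_stubs H.
  move/card_le1_eqP => /(_ x x' xi x'i) E; subst x'.
  by move: sxj sx'r rj; rewrite !inE => /eqP -> /eqP ->; rewrite eqxx.
- have : (#|stubs j| <= 1)%N by rewrite card_stubs H.
  move/card_le1_eqP => /(_ _ _ sxj yj) E; subst y.
  by move: syr xi ri; rewrite (Mt_inv _ sM) !inE => /eqP -> /eqP ->; rewrite eqxx.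
Qed.

End Graph.

Section Final.
Variables (R : realFieldType) (V : finType) (e : rel V).
Hypotheses (e_sym : symmetric e) (e_irr : irreflexive e).

Local Open Scope ring_scope.
Lemma sum_ind (T : finType) (A : {set T}) (b : pred T) :
  \sum_(s in A) ((b s)%:R : R) = (#|[set s in A | b s]|)%:R.
Proof.
rewrite -sum1_card natr_sum [RHS]big_mkcond [LHS]big_mkcond /=.
by apply: eq_bigr => s _; rewrite !inE; case: (s \in A); case: (b s).
Qed.

Lemma ncnE (s : {perm stub e}) i j :
  ((ncn s i j)%:R : R) = \sum_(r | (r != i) && (r != j)) ((conn s i r && conn s j r)%:R : R).
Proof.
rewrite /ncn -sum1_card natr_sum [RHS]big_mkcond [LHS]big_mkcond /=.
by apply: eq_bigr => r _; rewrite !inE; case: (r != i); case: (r != j); case: (conn s i r); case: (conn s j r).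
Qed.

Lemma ffN0 : ((ff (2 * nedges e))%:R : R) != 0.
Proof. by rewrite pnatr_eq0 -lt0n ff_even. Qed.

Lemma ProbE (ev0 : pred {perm stub e}) :
  Prob e R ev0 = (#|[set s in Mt [set: stub e] | ev0 s]|)%:R / (ff (2 * nedges e))%:R.
Proof. by rewrite /Prob matchingsE (card_Mt (card_stub e_sym e_irr)). Qed.

Lemma ExpectE (f : {perm stub e} -> R) :
  Expect e f = (\sum_(s in Mt [set: stub e]) f s) / (ff (2 * nedges e))%:R.
Proof. by rewrite /Expect matchingsE (card_Mt (card_stub e_sym e_irr)). Qed.

End Final.

Lemma cardU_disj (T : finType) (A B : {set T}) :
  (forall z, z \in A -> z \in B -> False) -> #|A :|: B| = (#|A| + #|B|)%N.
Proof.
move=> d; rewrite cardsU (_ : A :&: B = set0) ?cards0 ?subn0 //.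
by apply/setP => z; rewrite !inE; apply/negbTE/negP => /andP [a b]; exact: d z a b.
Qed.

Unset Implicit Arguments.
Local Open Scope ring_scope.
Theorem theorem1 (R : realFieldType) (V : finType) (e : rel V)
  (e_sym : symmetric e) (e_irr : irreflexive e)
  (hm : (1 <= nedges e)%N) (i j : V) (hij : i != j)
  (hki : (1 <= deg e i)%N) (hkj : (1 <= deg e j)%N) :
  let P := Pij e R i j in
  let m := nedges e in
  let Padj := Prob e R (fun s => conn s i j) in
  let Pcn := fun r => Prob e R (fun s => conn s i r && conn s j r) in
  let Ptri := fun r => Prob e R (fun s => [&& conn s i r, conn s j r & conn s i j]) in
  let EW := Expect e (fun s => weight R s i j) in
  [/\ ((deg e i = 1%N \/ deg e j = 1%N) ->
        EW = P * (\sum_(r | (r != i) && (r != j)) Pcn r) / 4 + P * Padj),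
      ((1 < deg e i)%N -> (1 < deg e j)%N ->
        EW = P / 4 * (\sum_(r | (r != i) && (r != j)) (Pcn r - Ptri r))
             + 2 * P * (\sum_(r | (r != i) && (r != j)) Ptri r) + 3 * P * Padj),
      Padj = Afun R (deg e i) (deg e j) m &
      forall r, r != i -> r != j ->
        Pcn r = Cfun R (deg e i) (deg e j) (deg e r) m /\
        Ptri r = Tfun R (deg e i) (deg e j) (deg e r) m].
Proof.
move=> P m Padj Pcn Ptri EW; rewrite {}/P {}/m {}/Padj {}/Pcn {}/Ptri {}/EW.
have Dc := card_stub e_sym e_irr.
have N0 := ffN0 R e.
have bnd2 : (deg e i + deg e j <= 2 * nedges e)%N.
  rewrite -Dc -!card_stubs -cardU_disj; last by move=> z; exact: stubs_disj hij.
  exact/subset_leq_card/subsetT.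
have bnd3 : forall r, r != i -> r != j -> (deg e i + deg e j + deg e r <= 2 * nedges e)%N.
  move=> r ri rj.
  rewrite -Dc -!card_stubs -cardU_disj; last by move=> z; exact: stubs_disj hij.
  rewrite -cardU_disj.
    exact/subset_leq_card/subsetT.
  move=> z; rewrite inE => /orP [] => H1 H2.
    by apply: (stubs_disj _ H1 H2); rewrite eq_sym.
  by apply: (stubs_disj _ H1 H2); rewrite eq_sym.
have PadjE : Prob e R (fun s => conn s i j) = Afun R (deg e i) (deg e j) (nedges e).
  rewrite ProbE //.
  have -> : #|[set s in Mt [set: stub e] | conn s i j]| =
            #|[set s in Mt [set: stub e] | ev (stubs e i) (stubs e j) s]|.
    by apply: eq_card => s; rewrite !inE connE.
  rewrite cntA ?subsetT //; last by move=> z; exact: stubs_disj hij.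
  rewrite !card_stubs Dc -Afun_eq //.
  by field.
have dji : j != i by rewrite eq_sym.
split; last 2 first.
- exact: PadjE.
- move=> r ri rj.
  have dir : i != r by rewrite eq_sym.
  have djr : j != r by rewrite eq_sym.
  split.
  + rewrite ProbE //.
    have -> : #|[set s in Mt [set: stub e] | conn s i r && conn s j r]| =
      #|[set s in Mt [set: stub e] | ev (stubs e i) (stubs e r) s && ev (stubs e j) (stubs e r) s]|.
      by apply: eq_card => s; rewrite !inE !connE.
    rewrite cntC ?subsetT //; last 3 first.
    * by move=> z; exact: stubs_disj hij.
    * by move=> z; exact: stubs_disj dir.
    * by move=> z; exact: stubs_disj djr.
    rewrite !card_stubs Dc -Cfun_eq ?bnd3 //.
    by field.
  + rewrite ProbE //.
    have -> : #|[set s in Mt [set: stub e] | [&& conn s i r, conn s j r & conn s i j]]| =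
      #|[set s in Mt [set: stub e] | (ev (stubs e i) (stubs e r) s && ev (stubs e j) (stubs e r) s)
                                      && ev (stubs e i) (stubs e j) s]|.
      by apply: eq_card => s; rewrite !inE !connE !andbA.
    rewrite cntT ?subsetT //; last 3 first.
    * by move=> z; exact: stubs_disj hij.
    * by move=> z; exact: stubs_disj dir.
    * by move=> z; exact: stubs_disj djr.
    rewrite !card_stubs Dc -Tfun_eq ?bnd3 //.
    by field.
- move=> Hd.
  set P := Pij e R i j.
  set M := Mt [set: stub e].
  set cn := fun (s : {perm stub e}) r => conn s i r && conn s j r.
  have pw : forall s, s \in M -> weight R s i j =
     P / 4 * (\sum_(r | (r != i) && (r != j)) ((cn s r)%:R : R)) + P * ((conn s i j)%:R : R).
    move=> s sM; rewrite /weight /CNij -/P /cn -ncnE.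
    case cij: (conn s i j) => /=.
      have -> : (deg e i == 1%N) || (deg e j == 1%N) by case: Hd => ->; rewrite eqxx ?orbT.
      by rewrite (ncn0 sM Hd cij); ring.
    by rewrite -addn1 natrD; ring.
  rewrite ExpectE // (eq_bigr _ pw) big_split /= -!mulr_sumr exchange_big /=.
  rewrite (eq_bigr (fun r => (#|[set s in M | cn s r]|)%:R)); last first.
    by move=> r _; rewrite sum_ind.
  rewrite sum_ind.
  rewrite [in RHS](eq_bigr (fun r => (#|[set s in M | cn s r]|)%:R / (ff (2 * nedges e))%:R)); last first.
    by move=> r _; rewrite ProbE.
  rewrite ProbE // -mulr_suml.
  by field.
- move=> Hi Hj.
  set P := Pij e R i j.
  set M := Mt [set: stub e].
  set N := ((ff (2 * nedges e))%:R : R).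
  set cn := fun (s : {perm stub e}) r => conn s i r && conn s j r.
  set tr := fun (s : {perm stub e}) r => [&& conn s i r, conn s j r & conn s i j].
  have pw : forall s, s \in M -> weight R s i j =
     P / 4 * (\sum_(r | (r != i) && (r != j)) (((cn s r)%:R : R) - (tr s r)%:R))
     + 2 * P * (\sum_(r | (r != i) && (r != j)) ((tr s r)%:R : R))
     + 3 * P * ((conn s i j)%:R : R).
    move=> s sM; rewrite /weight /CNij -/P.
    case cij: (conn s i j) => /=.
      rewrite (gtn_eqF Hi) (gtn_eqF Hj) /=.
      have -> : \sum_(r | (r != i) && (r != j)) (((cn s r)%:R : R) - (tr s r)%:R) = 0.
        by rewrite big1 // => r _; rewrite /tr /cn cij andbT subrr.
      have -> : \sum_(r | (r != i) && (r != j)) ((tr s r)%:R : R) = (ncn s i j)%:R.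
        by rewrite ncnE; apply: eq_bigr => r _; rewrite /tr cij andbT.
      by rewrite -addn1 natrD; ring.
    have -> : \sum_(r | (r != i) && (r != j)) (((cn s r)%:R : R) - (tr s r)%:R) = (ncn s i j)%:R.
      by rewrite ncnE; apply: eq_bigr => r _; rewrite /tr /cn cij !andbF subr0.
    have -> : \sum_(r | (r != i) && (r != j)) ((tr s r)%:R : R) = 0.
      by rewrite big1 // => r _; rewrite /tr cij !andbF.
    by rewrite -addn1 natrD; ring.
  rewrite ExpectE // -/N (eq_bigr _ pw) [in LHS]big_split [in LHS]big_split /= -!mulr_sumr [X in P / 4 * X]exchange_big [X in 2 * P * X]exchange_big /=.
  rewrite (eq_bigr (fun r => (#|[set s in M | cn s r]|)%:R - (#|[set s in M | tr s r]|)%:R)); last first.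
    by move=> r _; rewrite sumrB !sum_ind.
  rewrite [X in 2 * P * X](eq_bigr (fun r => (#|[set s in M | tr s r]|)%:R)); last first.
    by move=> r _; rewrite sum_ind.
  rewrite sum_ind.
  rewrite [in RHS](eq_bigr (fun r => ((#|[set s in M | cn s r]|)%:R - (#|[set s in M | tr s r]|)%:R) / N)); last first.
    by move=> r _; rewrite !ProbE // mulrBl.
  rewrite [X in _ = _ + 2 * P * X + _](eq_bigr (fun r => (#|[set s in M | tr s r]|)%:R / N)); last first.
    by move=> r _; rewrite ProbE.
  rewrite ProbE // -!mulr_suml.
  by field.
Qed.
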